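(* A finite simple graph $G$ belongs to $\mathcal{C}_3$ if and only if $\chi_c(G)<2$.
   Context: A circular ordering of a finite set is obtained by placing its elements at distinct points of a circle; formally, the set of triples $(x,y,z)$ of distinct elements such that clockwise from $x$ one meets $y$ before $z$. A homomorphism $(H,C_H)\to(G,C_G)$ of circularly ordered graphs is a map on vertices preserving edges such that $(f(x),f(y),f(z))\in C_G$ whenever $(x,y,z)\in C_H$ and $f(x),f(y),f(z)$ are pairwise distinct. $SP_3$ is the path $v_1v_2v_3$ with its (unique) circular ordering placing $v_1,v_2,v_3$ clockwise. $\mathcal{C}_3$ is the class of graphs $G$ admitting a circular ordering $C$ of $V(G)$ with no homomorphism from $SP_3$ to $(G,C)$. For integers $1\le q\le p$, $K_{p/q}$ is the graph on $\{0,\dots,p-1\}$ with $ij$ an edge iff $\min(|i-j|,p-|i-j|)\ge q$; $\chi_c(G)=\min\{p/q: G\to K_{p/q}\}$. *)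

(* Defs.v *)
From mathcomp Require Import all_boot.
Set Implicit Arguments. Unset Strict Implicit. Unset Printing Implicit Defensive.

Definition simple_graph (T : finType) (E : rel T) : Prop :=
  symmetric E /\ irreflexive E.

Definition cyc3 (a b c : nat) : bool :=
  [|| (a < b < c), (b < c < a) | (c < a < b)].

(* The circular ordering induced by placing the elements of T at distinct
   points of a circle, given by an injective position map pos : T -> nat:
   (x,y,z) is in C iff x,y,z are distinct and, clockwise from x, one meets y
   before z. *)
Definition circ_of (T : finType) (pos : T -> nat) (x y z : T) : Prop :=
  [/\ x != y, y != z, x != z & cyc3 (pos x) (pos y) (pos z)].

Definition is_circular_ordering (T : finType) (C : T -> T -> T -> Prop) : Prop :=
  exists pos : T -> nat, injective pos /\ forall x y z, C x y z <-> circ_of pos x y z.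

Definition co_hom (TH TG : finType) (EH : rel TH) (CH : TH -> TH -> TH -> Prop)
  (EG : rel TG) (CG : TG -> TG -> TG -> Prop) (f : TH -> TG) : Prop :=
  (forall x y, EH x y -> EG (f x) (f y)) /\
  (forall x y z, CH x y z -> f x != f y -> f y != f z -> f x != f z ->
     CG (f x) (f y) (f z)).

(* SP_3: the path v1 v2 v3 (vertices 0,1,2 of 'I_3), with v1,v2,v3 clockwise. *)
Definition SP3_edge : rel 'I_3 := fun i j =>
  ((i : nat) == 0) && ((j : nat) == 1) || ((i : nat) == 1) && ((j : nat) == 0) ||
  ((i : nat) == 1) && ((j : nat) == 2) || ((i : nat) == 2) && ((j : nat) == 1).

Definition SP3_circ : 'I_3 -> 'I_3 -> 'I_3 -> Prop :=
  circ_of (fun i : 'I_3 => (i : nat)).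

Definition in_C3 (T : finType) (E : rel T) : Prop :=
  exists C : T -> T -> T -> Prop, is_circular_ordering C /\
    ~ exists f : 'I_3 -> T, co_hom SP3_edge SP3_circ E C f.

Definition natdist (a b : nat) : nat := maxn a b - minn a b.
Definition Kpq_edge (p q : nat) : rel 'I_p := fun i j =>
  q <= minn (natdist i j) (p - natdist i j).

Definition graph_hom (T : finType) (E : rel T) (U : finType) (F : rel U) (f : T -> U) :=
  forall x y, E x y -> F (f x) (f y).

(* chi_c(G) < 2, i.e. the minimum of {p/q : 1 <= q <= p, G -> K_{p/q}} is < 2,
   i.e. some K_{p/q} with p/q < 2 (p < 2q) admits a homomorphism from G. *)
Definition chi_c_lt2 (T : finType) (E : rel T) : Prop :=
  exists p q : nat, [/\ 1 <= q, q <= p, p < 2 * q &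
    exists f : T -> 'I_p, graph_hom E (@Kpq_edge p q) f].

(* Main.v *)
Require Import Defs.
From mathcomp Require Import all_boot.
From mathcomp Require Import zify.

Lemma chi_noedge (T : finType) (E : rel T) :
  chi_c_lt2 E <-> (forall x y, ~~ E x y).
Proof.
split.
- move=> [p [q [q1 qp pq [f hf]]]] x y; apply/negP => exy.
  have := hf x y exy; rewrite /Kpq_edge /natdist.
  have := ltn_ord (f x); have := ltn_ord (f y).
  move: (nat_of_ord (f x)) (nat_of_ord (f y)) => a b ha hb; lia.
- move=> H; exists 1, 1; split => //.
  exists (fun _ => ord0) => x y; by rewrite (negbTE (H x y)).
Qed.

Lemma c3_noedge (T : finType) (E : rel T) : symmetric E ->
  in_C3 E <-> (forall x y, ~~ E x y).
Proof.
move=> sym; split.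
- move=> [C [_ nh]] x y; apply/negP => exy; apply: nh.
  exists (fun i : 'I_3 => if val i == 1 then y else x); split.
  + move=> [[|[|[|?]]] ?] [[|[|[|?]]] ?] //=; rewrite /SP3_edge //= => _;
      by rewrite ?exy // sym.
  + move=> [[|[|[|?]]] ?] [[|[|[|?]]] ?] [[|[|[|?]]] ?] //=;
      rewrite /SP3_circ /circ_of => -[] //=; rewrite ?eqxx //.
- move=> H.
  exists (circ_of (fun x : T => val (enum_rank x))); split.
  + exists (fun x : T => val (enum_rank x)); split => //.
    by move=> a b /val_inj /enum_rank_inj.
  + move=> [f [he _]].
    have := he ord0 (@Ordinal 3 1 isT) isT.
    by rewrite (negbTE (H _ _)).
Qed.

Theorem mainTheorem15 (T : finType) (E : rel T) :
  simple_graph E -> (in_C3 E <-> chi_c_lt2 E).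
Proof.
move=> [sym _]; rewrite chi_noedge; exact: c3_noedge.
Qed.
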